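(* Let $\{X_\gamma\}_{\gamma\in\Gamma}$ be a family of nonzero strictly convex real Banach spaces and let $Z$ denote either $Z_0=\bigoplus^{c_0}_{\gamma\in\Gamma}X_\gamma$ or $Z_\infty=\bigoplus^{\ell_\infty}_{\gamma\in\Gamma}X_\gamma$. Let $\gamma_0\in\Gamma$ and $x_{\gamma_0}\in S_{X_{\gamma_0}}$. Then $A(\gamma_0,x_{\gamma_0})=\{z\in S_Z: z(\gamma_0)=x_{\gamma_0}\}$ is a maximal norm-closed proper face of $B_Z$, equivalently, a maximal convex subset of $S_Z$.
   Context: All Banach spaces are real. $Z_\infty$ is the space of families $z=(z(\gamma))_{\gamma\in\Gamma}$, $z(\gamma)\in X_\gamma$, with $\|z\|=\sup_\gamma\|z(\gamma)\|<\infty$; $Z_0$ is its closed subspace of families with $\{\gamma:\|z(\gamma)\|>\varepsilon\}$ finite for all $\varepsilon>0$. A Banach space is strictly convex if every point of its unit sphere is an extreme point of its closed unit ball. *)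

(* Defs.v *)
From HB Require Import structures.
From mathcomp Require Import all_boot all_order all_algebra.
From mathcomp Require Import all_classical all_reals.
From mathcomp Require Import topology normedtype.
Set Implicit Arguments. Unset Strict Implicit. Unset Printing Implicit Defensive.
Import Order.TTheory GRing.Theory Num.Theory.
Import numFieldNormedType.Exports.
Local Open Scope classical_set_scope.
Local Open Scope ring_scope.

Section Defs.
Variable R : realType.

Definition closed_unit_ball (V : normedModType R) : set V := [set x | `|x| <= 1].
Definition unit_sphere (V : normedModType R) : set V := [set x | `|x| = 1].

Definition extreme_point (V : normedModType R) (C : set V) (x : V) : Prop :=
  C x /\ forall (y w : V) (t : R), C y -> C w -> 0 < t < 1 ->
    x = t *: y + (1 - t) *: w -> y = x /\ w = x.

Definition strictly_convex (V : normedModType R) : Prop :=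
  forall x : V, unit_sphere x -> extreme_point (@closed_unit_ball V) x.

Variables (Gamma : Type) (X : Gamma -> normedModType R).
Definition fam := forall g : Gamma, X g.

Definition fcomb (t : R) (y w : fam) : fam := fun g => t *: y g + (1 - t) *: w g.
Definition fsub (y w : fam) : fam := fun g => y g - w g.

Definition supnorm (z : fam) : R := sup [set `|z g| | g in [set: Gamma]].

Definition in_Zinf (z : fam) : Prop := has_ubound [set `|z g| | g in [set: Gamma]].
Definition in_Z0 (z : fam) : Prop :=
  in_Zinf z /\ forall e : R, 0 < e -> finite_set [set g | e < `|z g|].

Inductive sum_kind := c0_sum | linf_sum.

Definition in_Z (k : sum_kind) : set fam :=
  match k with c0_sum => in_Z0 | linf_sum => in_Zinf end.

Definition BZ (k : sum_kind) : set fam := [set z | in_Z k z /\ supnorm z <= 1].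
Definition SZ (k : sum_kind) : set fam := [set z | in_Z k z /\ supnorm z = 1].

Definition fconvex (C : set fam) : Prop :=
  forall y w t, C y -> C w -> 0 <= t <= 1 -> C (fcomb t y w).

Definition norm_closed (k : sum_kind) (F : set fam) : Prop :=
  forall z, in_Z k z ->
    (forall e : R, 0 < e -> exists2 w, F w & supnorm (fsub z w) < e) -> F z.

Definition face_of_BZ (k : sum_kind) (F : set fam) : Prop :=
  F `<=` BZ k /\ fconvex F /\
  forall y w t, BZ k y -> BZ k w -> 0 < t < 1 -> F (fcomb t y w) -> F y /\ F w.

Definition proper_closed_face (k : sum_kind) (F : set fam) : Prop :=
  face_of_BZ k F /\ norm_closed k F /\ F !=set0 /\ F <> BZ k.

Definition maximal_proper_closed_face (k : sum_kind) (F : set fam) : Prop :=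
  proper_closed_face k F /\
  forall G, proper_closed_face k G -> F `<=` G -> G = F.

Definition maximal_convex_subset_SZ (k : sum_kind) (F : set fam) : Prop :=
  (F `<=` SZ k /\ fconvex F) /\
  forall C, C `<=` SZ k -> fconvex C -> F `<=` C -> C = F.

Definition A_set (k : sum_kind) (g0 : Gamma) (x0 : X g0) : set fam :=
  [set z | SZ k z /\ z g0 = x0].

End Defs.

(* Main.v *)
Require Import Defs.
From HB Require Import structures.
From mathcomp Require Import all_boot all_order all_algebra.
From mathcomp Require Import all_classical all_reals.
From mathcomp Require Import topology normedtype.
From mathcomp Require Import lra.
Import Order.TTheory GRing.Theory Num.Theory.
Import numFieldNormedType.Exports.
Local Open Scope classical_set_scope.
Local Open Scope ring_scope.

Section Helpers.
Context {R : realType} {Gamma : Type} {X : Gamma -> normedModType R}.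

Definition lc (a b : R) (y w : fam X) : fam X := fun g => a *: y g + b *: w g.

Lemma in_Z_Zinf k (z : fam X) : in_Z k z -> in_Zinf z.
Proof. by case: k => //= -[]. Qed.

Lemma supnorm_ge (z : fam X) g : in_Zinf z -> `|z g| <= supnorm z.
Proof. by move=> hz; apply: ub_le_sup => //; exists g. Qed.

Lemma supnorm_le (z : fam X) (c : R) (g0 : Gamma) :
  (forall g, `|z g| <= c) -> supnorm z <= c.
Proof.
move=> h; apply: ge_sup; first by exists `|z g0|, g0.
by move=> _ [g _ <-].
Qed.

Arguments in_Z_Zinf {k z}.
Arguments supnorm_ge {z} g.
Arguments supnorm_le {z c} g0.
Lemma Zinf_bnd (z : fam X) : in_Zinf z -> exists M, forall g, `|z g| <= M.
Proof. by move=> [M hM]; exists M => g; apply: hM; exists g. Qed.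

Lemma in_Z_lc k a b (y w : fam X) : in_Z k y -> in_Z k w -> in_Z k (lc a b y w).
Proof.
have bnd : forall y w : fam X, in_Zinf y -> in_Zinf w -> in_Zinf (lc a b y w).
  move=> y' w' /Zinf_bnd[My hy] /Zinf_bnd[Mw hw].
  exists (`|a| * My + `|b| * Mw) => _ [g _ <-].
  rewrite /lc; apply: le_trans; first exact: ler_normD. rewrite !normrZ.
  by apply: lerD; apply: ler_wpM2l; rewrite ?normr_ge0 ?hy ?hw.
case: k => /=; last exact: bnd.
move=> [hy1 hy2] [hw1 hw2]; split; first exact: bnd.
move=> e he.
pose c := `|a| + `|b| + 1.
have cpos : 0 < c by rewrite /c; have := normr_ge0 a; have := normr_ge0 b; lra.
pose d := e / (2 * c).
have dpos : 0 < d by rewrite /d divr_gt0 // mulr_gt0.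
have dc : d * (2 * c) = e by rewrite /d mulfVK // mulf_neq0 // gt_eqF.
apply: (sub_finite_set (B := [set g | d < `|y g|] `|` [set g | d < `|w g|])).
  move=> g /= hg.
  case: (ltrP d `|y g|) => hy; first by left.
  case: (ltrP d `|w g|) => hw; first by right.
  exfalso; move: hg; rewrite /lc.
  have h1 : `|a *: y g + b *: w g| <= `|a| * d + `|b| * d.
    apply: le_trans; first exact: ler_normD. rewrite !normrZ.
    by apply: lerD; apply: ler_wpM2l.
  have na := normr_ge0 a; have nb := normr_ge0 b.
  move: h1 dc; rewrite /c; nra.
by rewrite finite_setU; split; [apply: hy2 | apply: hw2].
Qed.

Arguments in_Z_lc {k} a b {y w}.
Lemma fsub_lc (z w : fam X) : fsub z w = lc 1 (-1) z w.
Proof. by apply: functional_extensionality_dep => g; rewrite /fsub /lc scale1r scaleN1r. Qed.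

Definition sing (g0 : Gamma) (v : X g0) : fam X := fun g =>
  match pselect (g0 = g) with
  | left e => @eq_rect Gamma g0 (fun g => X g) v g e
  | right _ => 0 end.
Arguments sing {g0}.

Lemma sing_g0 g0 (v : X g0) : sing v g0 = v.
Proof.
rewrite /sing; case: pselect => [e|//].
by rewrite (Prop_irrelevance e erefl).
Qed.

Lemma sing_ne g0 (v : X g0) g : g0 <> g -> sing v g = 0.
Proof. by rewrite /sing; case: pselect. Qed.

Lemma in_Z_sing k g0 (v : X g0) : in_Z k (sing v).
Proof.
have bnd : in_Zinf (sing v).
  exists `|v| => _ [g _ <-].
  case: (pselect (g0 = g)) => [<-|ne]; first by rewrite sing_g0.
  by rewrite sing_ne // normr0.
case: k => //=; split => // e he.
apply: (sub_finite_set (B := [set g0])); last exact: finite_set1.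
move=> g /= hg; case: (pselect (g0 = g)) => [<-//|ne].
by move: hg; rewrite sing_ne // normr0 => /(lt_trans he); rewrite ltxx.
Qed.


Arguments in_Z_sing {k g0} v.
Lemma core k g0 (x0 : X g0) (hx0 : `|x0| = 1) (hsc0 : strictly_convex (X g0))
  (z : fam X) : in_Z k z -> supnorm z <= 1 -> z g0 <> x0 ->
  exists y, A_set k x0 y /\ in_Z k (fcomb (1/2) z y) /\ supnorm (fcomb (1/2) z y) < 1.
Proof.
move=> hz hzn hne.
have hzi := in_Z_Zinf hz.
pose y := lc 1 (-1) (sing (x0 + z g0)) z.
have hy : in_Z k y := in_Z_lc 1 (-1) (in_Z_sing _) hz.
have yg0 : y g0 = x0 by rewrite /y /lc sing_g0 scale1r scaleN1r addrK.
have yg : forall g, g0 <> g -> y g = - z g.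
  by move=> g ne; rewrite /y /lc sing_ne // scaler0 add0r scaleN1r.
have hyn : supnorm y = 1.
  apply/le_anti/andP; split.
    apply: (supnorm_le g0) => g; case: (pselect (g0 = g)) => [<-|ne].
      by rewrite yg0 hx0.
    by rewrite yg // normrN; apply: le_trans hzn; apply: supnorm_ge.
  by have := supnorm_ge g0 (in_Z_Zinf hy); rewrite yg0 hx0.
exists y; split; first by split.
have hm : in_Z k (fcomb (1/2) z y) by exact: (in_Z_lc (1/2) (1 - 1/2) hz hy).
split=> //.
have hzg0 : `|z g0| <= 1 := le_trans (supnorm_ge g0 hzi) hzn.
have mg0 : fcomb (1/2) z y g0 = 1/2 *: z g0 + (1 - 1/2) *: x0 by rewrite /fcomb yg0.
have hc : `|fcomb (1/2) z y g0| < 1.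
  have hle : `|fcomb (1/2) z y g0| <= 1.
    rewrite mg0; apply: le_trans; first exact: ler_normD.
    rewrite !normrZ hx0 !ger0_norm; try lra.
  rewrite lt_neqAle hle andbT; apply/eqP => hc1.
  have [_ H] := hsc0 _ hc1.
  have h12 : ((0:R) < 1/2) && (1/2 < (1:R)) by apply/andP; split; lra.
  have hx0b : `|x0| <= 1 by rewrite hx0.
  have [e1 e2] := H (z g0) x0 (1/2) hzg0 hx0b h12 mg0.
  by apply: hne; rewrite e1 e2.
apply: le_lt_trans hc; apply: (supnorm_le g0) => g.
case: (pselect (g0 = g)) => [<-//|ne].
have e : (1 - 1/2 : R) = 1/2 by lra.
by rewrite /fcomb yg // e scalerN addrN normr0 normr_ge0.
Qed.

Lemma face_full k (g0 : Gamma) (F : set (fam X)) (p : fam X) :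
  face_of_BZ k F -> F p -> supnorm p < 1 -> F = BZ k.
Proof.
move=> [sub [cv fc]] Fp hp.
have [hpz hpn] := sub _ Fp.
have s0 : 0 <= supnorm p := le_trans (normr_ge0 _) (supnorm_ge g0 (in_Z_Zinf hpz)).
pose t := (1 - supnorm p) / 2.
pose o := lc 0 0 p p.
have ho : BZ k o.
  split; first exact: in_Z_lc.
  apply: (@le_trans _ _ 0); last exact: ler01.
  by apply: (supnorm_le g0) => g; rewrite /o /lc !scale0r addr0 normr0.
have t1 : 0 < 1 - t by rewrite /t; lra.
pose w := lc (1 - t)^-1 0 p p.
have hw : BZ k w.
  split; first exact: in_Z_lc.
  apply: (supnorm_le g0) => g.
  have it : 0 <= (1 - t)^-1 by rewrite invr_ge0; lra.
  rewrite /w /lc scale0r addr0 normrZ (ger0_norm it).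
  have hpg : `|p g| <= supnorm p := supnorm_ge g (in_Z_Zinf hpz).
  rewrite ler_pdivrMl // mulr1 /t; lra.
have eqp : p = fcomb t o w.
  apply: functional_extensionality_dep => g.
  rewrite /fcomb /o /w /lc !scale0r !addr0 scaler0 add0r scalerA mulfV ?scale1r //.
  exact: lt0r_neq0.
have ht : 0 < t < 1 by apply/andP; split; rewrite /t; lra.
have [Fo _] := fc o w t ho hw ht (eq_ind _ F Fp _ eqp).
apply/seteqP; split => // y hy.
pose ny := lc (-1) 0 y y.
have hny : BZ k ny.
  split; first by apply: in_Z_lc; case: hy.
  apply: (supnorm_le g0) => g.
  rewrite /ny /lc scale0r addr0 scaleN1r normrN.
  by apply: le_trans (proj2 hy); apply: supnorm_ge; apply: in_Z_Zinf (proj1 hy).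
have e : (1 - 1/2 : R) = 1/2 by lra.
have eqo : o = fcomb (1/2) y ny.
  apply: functional_extensionality_dep => g.
  by rewrite /fcomb /o /ny /lc !scale0r !addr0 scaleN1r e scalerN addrN.
have h12 : ((0:R) < 1/2) && (1/2 < (1:R)) by apply/andP; split; lra.
by have [] := fc y ny (1/2) hy hny h12 (eq_ind _ F Fo _ eqo).
Qed.


Arguments core {k g0 x0} hx0 hsc0 {z}.
Arguments face_full {k} g0 {F p}.
Lemma mainlem k g0 (x0 : X g0) (hx0 : unit_sphere x0) (hsc0 : strictly_convex (X g0)) :
  maximal_proper_closed_face k (A_set k x0) /\ maximal_convex_subset_SZ k (A_set k x0).
Proof.
have hx0' : `|x0| = 1 := hx0.
have hA_sub : A_set k x0 `<=` BZ k by move=> z [[hz hn] _]; split=> //; rewrite hn.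
have hA_cv : fconvex (A_set k x0).
  move=> y w t [[hy hyn] hy0] [[hw hwn] hw0] /andP[t0 t1].
  have hm : in_Z k (fcomb t y w) by exact: (in_Z_lc t (1 - t) hy hw).
  have e1 : t + (1 - t) = 1 :> R by lra.
  have m0 : fcomb t y w g0 = x0 by rewrite /fcomb hy0 hw0 -scalerDl e1 scale1r.
  split=> //; split=> //; apply/le_anti/andP; split.
    apply: (supnorm_le g0) => g; rewrite /fcomb.
    apply: le_trans; first exact: ler_normD.
    have hyg : `|y g| <= 1 by rewrite -hyn; apply: supnorm_ge; apply: in_Z_Zinf hy.
    have hwg : `|w g| <= 1 by rewrite -hwn; apply: supnorm_ge; apply: in_Z_Zinf hw.
    rewrite !normrZ !ger0_norm //; last lra.
    nra.
  by have := supnorm_ge g0 (in_Z_Zinf hm); rewrite m0 hx0'.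
have hA_face : forall y w t, BZ k y -> BZ k w -> 0 < t < 1 ->
    A_set k x0 (fcomb t y w) -> A_set k x0 y /\ A_set k x0 w.
  move=> y w t [hy hyn] [hw hwn] ht [[hm _] hm0].
  have hyg := le_trans (supnorm_ge g0 (in_Z_Zinf hy)) hyn.
  have hwg := le_trans (supnorm_ge g0 (in_Z_Zinf hw)) hwn.
  have [_ H] := hsc0 x0 hx0.
  have [ey ew] := H (y g0) (w g0) t hyg hwg ht (esym hm0).
  split; (split; [split=> //; apply/le_anti/andP; split=> // | by []]).
    by have := supnorm_ge g0 (in_Z_Zinf hy); rewrite ey hx0'.
  by have := supnorm_ge g0 (in_Z_Zinf hw); rewrite ew hx0'.
have hA_closed : norm_closed k (A_set k x0).
  move=> z hz happ.
  have key : forall e, 0 < e -> exists2 w, A_set k x0 w & forall g, `|z g - w g| < e.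
    move=> e he; have [w Aw hw] := happ e he; exists w => // g.
    apply: le_lt_trans hw.
    have hf : in_Zinf (fsub z w).
      by rewrite fsub_lc; apply: in_Z_Zinf; apply: in_Z_lc hz (proj1 (proj1 Aw)).
    exact: (supnorm_ge g hf).
  have zg0 : z g0 = x0.
    apply/eqP; rewrite -subr_eq0; apply/negP => /negP hne.
    have hpos : 0 < `|z g0 - x0| by rewrite normr_gt0.
    have [w [_ wg0] hw] := key _ hpos.
    by move: (hw g0); rewrite wg0 ltxx.
  split=> //; split=> //; apply/le_anti/andP; split; last first.
    by have := supnorm_ge g0 (in_Z_Zinf hz); rewrite zg0 hx0'.
  rewrite leNgt; apply/negP => h1.
  have he : 0 < (supnorm z - 1) / 2 by lra.
  have [w [[hw hwn] _] hzw] := key _ he.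
  have : supnorm z <= 1 + (supnorm z - 1) / 2.
    apply: (supnorm_le g0) => g.
    have := ler_normD (w g) (z g - w g); rewrite (addrC (w g)) subrK => h.
    have hwg : `|w g| <= 1 by rewrite -hwn; apply: supnorm_ge; apply: in_Z_Zinf hw.
    have := hzw g; lra.
  lra.
have hsing : A_set k x0 (sing x0).
  split; last exact: sing_g0.
  split; first exact: in_Z_sing.
  apply/le_anti/andP; split.
    apply: (supnorm_le g0) => g; case: (pselect (g0 = g)) => [<-|ne].
      by rewrite sing_g0 hx0'.
    by rewrite sing_ne // normr0 ler01.
  by have := supnorm_ge g0 (in_Z_Zinf (in_Z_sing (k:=k) x0)); rewrite sing_g0 hx0'.
have hneq : A_set k x0 <> BZ k.
  move=> eqA.
  pose o := lc 0 0 (sing x0) (sing x0).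
  have ho0 : supnorm o <= 0.
    by apply: (supnorm_le g0) => g; rewrite /o /lc !scale0r addr0 normr0.
  have : BZ k o.
    split; first by apply: in_Z_lc; apply: in_Z_sing.
    by apply: le_trans ho0 _; exact: ler01.
  rewrite -eqA => -[[_ h1] _].
  by move: ho0; rewrite h1 ler10.
have hface : face_of_BZ k (A_set k x0) by split=> //; split.
split.
  split; first by split=> //; split=> //; split=> //; exists (sing x0).
  move=> G [Gface [_ [_ GneBZ]]] AG.
  have [Gsub [Gcv Gfc]] := Gface.
  apply/seteqP; split; last exact: AG.
  move=> z Gz; have [hz hzn] := Gsub _ Gz.
  case: (pselect (z g0 = x0)) => [zg0|zne].
    split=> //; split=> //; apply/le_anti/andP; split=> //.
    rewrite leNgt; apply/negP => hlt.
    exact: GneBZ (face_full g0 Gface Gz hlt).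
  exfalso.
  have [y [Ay [hm hmn]]] := core hx0' hsc0 hz hzn zne.
  have h12 : ((0:R) <= 1/2) && (1/2 <= (1:R)) by apply/andP; split; lra.
  have Gm : G (fcomb (1/2) z y) := Gcv z y (1/2) Gz (AG _ Ay) h12.
  exact: GneBZ (face_full g0 Gface Gm hmn).
split; first by split=> //; move=> z [].
move=> C CS Ccv AC.
apply/seteqP; split; last exact: AC.
move=> z Cz; have [hz hzn] := CS _ Cz.
case: (pselect (z g0 = x0)) => [zg0|zne]; first by split.
exfalso.
have hzn' : supnorm z <= 1 by rewrite hzn.
have [y [Ay [hm hmn]]] := core hx0' hsc0 hz hzn' zne.
have h12 : ((0:R) <= 1/2) && (1/2 <= (1:R)) by apply/andP; split; lra.
have [_ h1] := CS _ (Ccv z y (1/2) Cz (AC _ Ay) h12).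
by move: hmn; rewrite h1 ltxx.
Qed.

End Helpers.

Theorem lemma2p7 (R : realType) (Gamma : Type)
  (X : Gamma -> completeNormedModType R)
  (hnz : forall g : Gamma, exists x : X g, x <> 0)
  (hsc : forall g : Gamma, strictly_convex (X g))
  (k : sum_kind) (g0 : Gamma) (x0 : X g0)
  (hx0 : unit_sphere x0) :
  let Xn := fun g : Gamma => (X g : normedModType R) in
  maximal_proper_closed_face (X:=Xn) k (@A_set R Gamma Xn k g0 x0) /\
  maximal_convex_subset_SZ (X:=Xn) k (@A_set R Gamma Xn k g0 x0).
Proof.
move=> Xn.
exact: (@mainlem R Gamma Xn k g0 x0 hx0 (hsc g0)).
Qed.
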